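(* Let $(X,M)$ be a supermidpoint set, with associated binary operation $m(x,y)=M(x,y,y,\dots)$. The following are equivalent: (1) $X$ is cancellative, i.e. $m(x,y)=m(x,z)$ implies $y=z$; (2) for all sequences $(x_i),(y_i),(z_i),(w_i)$ of elements of $X$, if $m_n(x_0,\dots,x_{n-1},z_n)=m_n(y_0,\dots,y_{n-1},w_n)$ for all $n\ge 0$, then $M(x_0,x_1,x_2,\dots)=M(y_0,y_1,y_2,\dots)$.
   Context: A supermidpoint set is a set $X$ with $M\colon X^\omega\to X$ (written $M_i\,x_i=M(x_0,x_1,\dots)$) satisfying: $M(x,x,x,\dots)=x$; $M(x,y,y,\dots)=M(y,x,x,\dots)$; $M_iM_j\,x_{ij}=M_jM_i\,x_{ij}$; $M_i\,x_i=M(x_0,M_i x_{i+1},M_i x_{i+1},\dots)$. Derived operations: $m_0(x)=x$, $m_n(x_0,\dots,x_n)=m(x_0,m_{n-1}(x_1,\dots,x_n))$ for $n\ge1$ (so for $n=0$ the hypothesis reads $z_0=w_0$). *)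

(* Defs.v *)
From Stdlib Require Import Arith.

Definition seq2 {X : Type} (x y : X) : nat -> X :=
  fun i => match i with 0 => x | _ => y end.

Definition shift {X : Type} (s : nat -> X) : nat -> X := fun i => s (S i).

Definition is_supermidpoint {X : Type} (M : (nat -> X) -> X) : Prop :=
  (forall x : X, M (fun _ => x) = x) /\
  (forall x y : X, M (seq2 x y) = M (seq2 y x)) /\
  (forall x : nat -> nat -> X,
      M (fun i => M (fun j => x i j)) = M (fun j => M (fun i => x i j))) /\
  (forall x : nat -> X, M x = M (seq2 (x 0) (M (shift x)))).

Definition mid {X : Type} (M : (nat -> X) -> X) (x y : X) : X := M (seq2 x y).

Fixpoint m_n {X : Type} (M : (nat -> X) -> X) (n : nat) (s : nat -> X) : X :=
  match n with
  | 0 => s 0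
  | S k => mid M (s 0) (m_n M k (shift s))
  end.

(* the finite sequence (x_0,...,x_{n-1}, z_n), padded arbitrarily after n *)
Definition prefix_then {X : Type} (n : nat) (x z : nat -> X) : nat -> X :=
  fun i => if i <? n then x i else z n.

Definition cancellative {X : Type} (M : (nat -> X) -> X) : Prop :=
  forall x y z : X, mid M x y = mid M x z -> y = z.

(* Main.v *)
Require Import Defs.
From Stdlib Require Import Arith FunctionalExtensionality.

Definition Fp {X : Type} (M : (nat -> X) -> X) (n : nat) (s : nat -> X) (p : X) : X :=
  m_n M n (prefix_then n s (fun _ => p)).

Lemma mid_comm {X : Type} (M : (nat -> X) -> X) : is_supermidpoint M ->
  forall a b, mid M a b = mid M b a.
Proof. intros [H1 [H2 [H3 H4]]] a b. apply H2. Qed.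

Lemma mid_idem {X : Type} (M : (nat -> X) -> X) : is_supermidpoint M ->
  forall a, mid M a a = a.
Proof.
  intros [H1 [H2 [H3 H4]]] a. unfold mid.
  replace (seq2 a a) with (fun _ : nat => a). apply H1.
  apply functional_extensionality; intros [|i]; reflexivity.
Qed.

Lemma M_mid {X : Type} (M : (nat -> X) -> X) : is_supermidpoint M ->
  forall s t, M (fun i => mid M (s i) (t i)) = mid M (M s) (M t).
Proof.
  intros HM s t. destruct HM as [H1 [H2 [H3 H4]]].
  pose proof (H3 (fun i j => seq2 (s j) (t j) i)) as E. simpl in E.
  unfold mid.
  replace (seq2 (M s) (M t)) with (fun i => M (fun j => seq2 (s j) (t j) i)).
  - rewrite E. reflexivity.
  - apply functional_extensionality; intros [|i]; reflexivity.
Qed.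

Lemma medial {X : Type} (M : (nat -> X) -> X) : is_supermidpoint M ->
  forall a b c d, mid M (mid M a b) (mid M c d) = mid M (mid M a c) (mid M b d).
Proof.
  intros HM a b c d.
  pose proof (M_mid M HM (seq2 a b) (seq2 c d)) as E.
  change (mid M (M (seq2 a b)) (M (seq2 c d)) = M (seq2 (mid M a c) (mid M b d))).
  rewrite <- E. f_equal.
  apply functional_extensionality; intros [|i]; reflexivity.
Qed.

Lemma Fp_S {X : Type} (M : (nat -> X) -> X) n s p :
  Fp M (S n) s p = mid M (s 0) (Fp M n (shift s) p).
Proof. reflexivity. Qed.

Lemma Fp_0 {X : Type} (M : (nat -> X) -> X) s p : Fp M 0 s p = p.
Proof. reflexivity. Qed.

Lemma Fp_Sr {X : Type} (M : (nat -> X) -> X) : forall n s p,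
  Fp M (S n) s p = Fp M n s (mid M (s n) p).
Proof.
  induction n; intros s p.
  - reflexivity.
  - rewrite Fp_S, IHn, Fp_S. reflexivity.
Qed.

Lemma Fp_medial {X : Type} (M : (nat -> X) -> X) : is_supermidpoint M ->
  forall n s t p q, mid M (Fp M n s p) (Fp M n t q) =
                    Fp M n (fun i => mid M (s i) (t i)) (mid M p q).
Proof.
  intros HM; induction n; intros s t p q.
  - reflexivity.
  - rewrite !Fp_S, medial by exact HM. rewrite IHn. reflexivity.
Qed.

Lemma Fp_cancel {X : Type} (M : (nat -> X) -> X) : cancellative M ->
  forall n s p q, Fp M n s p = Fp M n s q -> p = q.
Proof.
  intros HC; induction n; intros s p q E.
  - exact E.
  - rewrite !Fp_S in E. apply HC in E. eapply IHn; exact E.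
Qed.

Lemma iter_prefix {X : Type} (M : (nat -> X) -> X) y a : forall n,
  m_n M n (prefix_then n (fun _ => y) (fun _ => a)) = Nat.iter n (mid M y) a.
Proof.
  induction n.
  - reflexivity.
  - simpl. rewrite <- IHn. reflexivity.
Qed.

Theorem mainTheorem6 (X : Type) (M : (nat -> X) -> X) :
  is_supermidpoint M ->
  (cancellative M <->
   (forall x y z w : nat -> X,
      (forall n : nat, m_n M n (prefix_then n x z) = m_n M n (prefix_then n y w)) ->
      M x = M y)).
Proof.
  intros HM. split.
  - intros HC x y z w Heq.
    assert (HF : forall n, Fp M n x (z n) = Fp M n y (w n)) by (intro n; exact (Heq n)).
    assert (Hkey : forall i, mid M (mid M (x i) (z (S i))) (w i)
                          = mid M (mid M (y i) (w (S i))) (z i)).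
    { intro i. pose proof (HF (S i)) as E1. rewrite !Fp_Sr in E1.
      pose proof (HF i) as E0.
      assert (E : mid M (Fp M i x (mid M (x i) (z (S i)))) (Fp M i y (w i))
                = mid M (Fp M i y (mid M (y i) (w (S i)))) (Fp M i x (z i))).
      { rewrite E1, E0. reflexivity. }
      rewrite !(Fp_medial M HM) in E.
      replace (fun i0 => mid M (y i0) (x i0)) with (fun i0 => mid M (x i0) (y i0)) in E.
      2:{ apply functional_extensionality; intro k; apply (mid_comm M HM). }
      apply (Fp_cancel M HC) in E. exact E. }
    assert (Hz0 : z 0 = w 0) by exact (HF 0).
    assert (E := f_equal M (functional_extensionality _ _ Hkey)).
    rewrite (M_mid M HM (fun i => mid M (x i) (z (S i))) w),
            (M_mid M HM (fun i => mid M (y i) (w (S i))) z) in E.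
    change (fun i => mid M (x i) (z (S i))) with (fun i => mid M (x i) (shift z i)) in E.
    change (fun i => mid M (y i) (w (S i))) with (fun i => mid M (y i) (shift w i)) in E.
    rewrite !(M_mid M HM) in E.
    destruct HM as [H1 [H2 [H3 H4]]].
    rewrite (H4 w), (H4 z) in E. rewrite <- Hz0 in E.
    assert (HM : is_supermidpoint M) by (repeat split; assumption).
    change (mid M (mid M (M x) (M (shift z))) (mid M (z 0) (M (shift w))) =
            mid M (mid M (M y) (M (shift w))) (mid M (z 0) (M (shift z)))) in E.
    rewrite (medial M HM (M x)), (medial M HM (M y)) in E.
    rewrite (mid_comm M HM (M (shift w))) in E.
    rewrite (mid_comm M HM (mid M (M x) (z 0))), (mid_comm M HM (mid M (M y) (z 0))) in E.
    apply HC in E. rewrite (mid_comm M HM (M x)), (mid_comm M HM (M y)) in E.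
    apply HC in E. exact E.
  - intros H a y z Hc.
    rewrite (mid_comm M HM a y), (mid_comm M HM a z) in Hc.
    assert (Hind : forall n, Nat.iter n (mid M y) a = Nat.iter n (mid M z) a /\
                   Nat.iter (S n) (mid M y) a = Nat.iter (S n) (mid M z) a).
    { induction n as [|n [IH1 IH2]].
      - split; [reflexivity|exact Hc].
      - split; [exact IH2|].
        simpl in IH2 |- *. set (c := Nat.iter n (mid M y) a) in *.
        set (d := Nat.iter n (mid M z) a) in *.
        transitivity (mid M (mid M y z) (mid M y c)).
        + rewrite IH2 at 1. rewrite <- (mid_idem M HM y) at 1.
          rewrite (medial M HM). rewrite IH1. reflexivity.
        + symmetry. rewrite <- IH2 at 1. rewrite <- (mid_idem M HM z) at 1.
          rewrite (medial M HM). rewrite IH1 at 1. rewrite <- IH2, (mid_comm M HM z y). reflexivity. }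
    destruct HM as [H1 [H2 [H3 H4]]].
    rewrite <- (H1 y), <- (H1 z).
    apply (H (fun _ => y) (fun _ => z) (fun _ => a) (fun _ => a)).
    intro n. rewrite !iter_prefix. apply Hind.
Qed.
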